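(* For $1\le i\le k$ let $G_i$ be an $r_i$-regular graph with $n_i\ge 2$ vertices and let $A_i$ be an Abelian group of order $n_i$; put $r=\sum_{i=1}^k r_i$. Suppose $\{1,\ldots,k\}$ is partitioned into three (possibly empty) sets $I,J,L$ such that: (a) for each $i\in I$, $G_i$ is $A_i$-distance magic and $\gcd(r-r_i,n_i)=1$; (b) for each $j\in J$, $G_j$ is $A_j$-distance antimagic and $\exp(A_j)$ divides $r-r_j$; (c) for each $l\in L$, $G_l$ admits an $A_l$-balanced labelling and $\gcd(r,n_l)=1$. Then $G_1\Box\cdots\Box G_k$ is $A_1\times\cdots\times A_k$-distance antimagic.
   Context: The Cartesian product $G_1\Box\cdots\Box G_k$ has vertex set $V(G_1)\times\cdots\times V(G_k)$, with $(x_1,\ldots,x_k)$ and $(y_1,\ldots,y_k)$ adjacent iff they differ in exactly one coordinate $i$ and $x_iy_i\in E(G_i)$. $\exp(A)$ is the least positive integer $m$ with $mx=0$ for all $x\in A$. For a graph $G$ with $n$ vertices and an Abelian group $A$ of order $n$ (written additively), and a bijection $f:V(G)\to A$, the weight of $x$ is $w_f(x)=\sum_{y\in N(x)} f(y)$ computed in $A$ ($N(x)$ the open neighbourhood). $f$ is an $A$-distance antimagic labelling if all weights are pairwise distinct, and an $A$-distance magic labelling if all weights are equal. $G$ is $A$-distance antimagic (resp. magic) if it admits such a labelling. If $G$ is $r$-regular, a bijection $f:V(G)\to A$ is an $A$-balanced labelling if $w_f(x)=r f(x)$ for every $x\in V(G)$. *)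

(* Defs.v *)
From HB Require Import structures.
From mathcomp Require Import all_boot all_order all_algebra all_fingroup all_solvable.
Set Implicit Arguments. Unset Strict Implicit. Unset Printing Implicit Defensive.
Import GRing.Theory.
Local Open Scope ring_scope.

Section DProd.
Variables (k : nat) (A : 'I_k -> finZmodType).
Definition dprodG := {dffun forall i, A i}.
HB.instance Definition _ := Finite.on dprodG.
Definition dprod0 : dprodG := [ffun i => 0].
Definition dprodD (x y : dprodG) : dprodG := [ffun i => x i + y i].
Definition dprodN (x : dprodG) : dprodG := [ffun i => - x i].
Lemma dprodA : associative dprodD.
Proof. by move=> x y z; apply/ffunP=> i; rewrite !ffunE addrA. Qed.
Lemma dprodC : commutative dprodD.
Proof. by move=> x y; apply/ffunP=> i; rewrite !ffunE addrC. Qed.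
Lemma dprod0D : left_id dprod0 dprodD.
Proof. by move=> x; apply/ffunP=> i; rewrite !ffunE add0r. Qed.
Lemma dprodND : left_inverse dprod0 dprodN dprodD.
Proof. by move=> x; apply/ffunP=> i; rewrite !ffunE addNr. Qed.
HB.instance Definition _ :=
  GRing.isZmodule.Build dprodG dprodA dprodC dprod0D dprodND.
End DProd.

Definition simple_graph (V : finType) (e : rel V) : Prop :=
  symmetric e /\ irreflexive e.

Definition regular (V : finType) (e : rel V) (r : nat) : Prop :=
  forall x : V, #|[set y | e x y]| = r.

Definition weight (V : finType) (e : rel V) (A : zmodType) (f : V -> A) (x : V) : A :=
  \sum_(y | e x y) f y.

Definition distance_antimagic_labelling (V : finType) (e : rel V) (A : zmodType)
  (f : V -> A) : Prop := bijective f /\ injective (weight e f).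

Definition distance_magic_labelling (V : finType) (e : rel V) (A : zmodType)
  (f : V -> A) : Prop := bijective f /\ forall x y, weight e f x = weight e f y.

Definition distance_antimagic (V : finType) (e : rel V) (A : zmodType) : Prop :=
  exists f : V -> A, distance_antimagic_labelling e f.

Definition distance_magic (V : finType) (e : rel V) (A : zmodType) : Prop :=
  exists f : V -> A, distance_magic_labelling e f.

Definition balanced_labelling (V : finType) (e : rel V) (r : nat) (A : zmodType)
  (f : V -> A) : Prop := bijective f /\ forall x, weight e f x = f x *+ r.

Definition zexp (A : finZmodType) : nat :=
  exponent [set: FinRing.Zmodule_to_finGroup A].

Definition cart_prod (k : nat) (V : 'I_k -> finType) (e : forall i, rel (V i))
  : rel {dffun forall i, V i} :=
  fun x y => [exists i, e i (x i) (y i) && [forall j, (j != i) ==> (x j == y j)]].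

(* Main.v *)
Require Import Defs.
From HB Require Import structures.
From mathcomp Require Import all_boot all_order all_algebra all_fingroup all_solvable.
From Stdlib Require Import ClassicalEpsilon.
Import GRing.Theory.

Section Helpers.
Local Open Scope ring_scope.
Lemma mulrn_card (A : finZmodType) (a : A) : a *+ #|A| = 0.
Proof.
have := @expg_cardG (FinRing.Zmodule_to_finGroup A) [set: A] a (in_setT _).
by rewrite cardsT.
Qed.

Lemma mulrn_coprime_inj (A : finZmodType) m (a b : A) :
  coprime m #|A| -> a *+ m = b *+ m -> a = b.
Proof.
move=> cop H; apply/eqP; rewrite -subr_eq0; apply/eqP.
have Hm : (a - b) *+ m = 0 by rewrite mulrnBl H subrr.
set c := a - b in Hm *.
have o1 : (@order (FinRing.Zmodule_to_finGroup A) c %| m)%N by rewrite order_dvdn FinRing.zmodXgE Hm.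
have o2 : (@order (FinRing.Zmodule_to_finGroup A) c %| #|A|)%N.
  by rewrite order_dvdn FinRing.zmodXgE mulrn_card.
have : (@order (FinRing.Zmodule_to_finGroup A) c %| 1)%N.
  by rewrite -(eqP cop) dvdn_gcd o1 o2.
by rewrite dvdn1 order_eq1 => /eqP.
Qed.

Lemma mulrn_exp (A : finZmodType) m (a : A) : (zexp A %| m)%N -> a *+ m = 0.
Proof.
move=> d; have := @expg_exponent (FinRing.Zmodule_to_finGroup A) a [set: FinRing.Zmodule_to_finGroup A] (in_setT _).
case/dvdnP: d => q ->; rewrite /zexp => H.
rewrite FinRing.zmodXgE in H; by rewrite mulnC mulrnA H mul0rn.
Qed.
Variables (k : nat) (V : 'I_k -> finType) (e : forall i, rel (V i))
  (A : 'I_k -> finZmodType) (r : 'I_k -> nat).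
Hypothesis irr : forall i, @irreflexive (V i) (e i).
Hypothesis reg : forall i, @regular (V i) (e i) (r i).
Variable f : forall i, V i -> A i.
Definition prodlab (x : {dffun forall i, V i}) : dprodG A := [ffun i => f i (x i)].

Lemma dprod_sumE (I : finType) (P : pred I) (F : I -> dprodG A) i :
  (\sum_(y | P y) F y) i = \sum_(y | P y) F y i.
Proof.
apply: (big_morph (fun a : dprodG A => a i)) => [a b|]; first by rewrite /= ffunE.
by rewrite /= ffunE.
Qed.

Definition upd (x : {dffun forall i, V i}) j (z : V j) : {dffun forall i, V i} :=
  finfun (dfwith (fun l => x l) z).

Lemma weight_prod x i : weight (cart_prod e) prodlab x i =
  weight (e i) (f i) (x i) + f i (x i) *+ (\sum_t r t - r i).
Proof.
rewrite /weight dprod_sumE.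
pose Q j (y : {dffun forall i, V i}) :=
  e j (x j) (y j) && [forall l, (l != j) ==> (x l == y l)].
have uniqQ j j' y : Q j y -> Q j' y -> j = j'.
  case/andP=> ej _ /andP [_ /forallP H]; apply/eqP; apply: contraLR ej => ne.
  by move: (H j); rewrite ne /= => /eqP <-; rewrite irr.
transitivity (\sum_j \sum_(y | Q j y) prodlab y i).
  symmetry; rewrite (exchange_big_dep xpredT) //= [RHS]big_mkcond; apply: eq_bigr => y _.
  rewrite /cart_prod; case: existsP => [[j0 Hj0]|nQ].
    by rewrite (big_pred1 j0) // => j; apply/idP/eqP => [Hj|->] //; exact: uniqQ Hj Hj0.
  by rewrite big_pred0 // => j; apply/negP => Hj; apply: nQ; exists j.
have step j : \sum_(y | Q j y) prodlab y i =
    \sum_(z | e j (x j) z) prodlab (upd x j z) i.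
  rewrite (reindex_onto (upd x j) (fun y => y j)).
    apply: eq_bigl => z; rewrite /Q /upd ffunE dfwith_in eqxx andbT.
    rewrite andb_idr // => _; apply/forallP => l; apply/implyP => nl.
    by rewrite ffunE dfwith_out // eq_sym.
  move=> y /andP [_ /forallP H]; apply/ffunP => l; rewrite ffunE.
  case: dfwithP => // l' nl'; move: (H l'); rewrite eq_sym nl' /= => /eqP.
  done.
rewrite (eq_bigr _ (fun j _ => step j)).
rewrite (bigD1 i) //=.
congr (_ + _).
  by apply: eq_bigr => z _; rewrite /prodlab /upd !ffunE dfwith_in.
rewrite (bigD1 i (erefl true)) /= addKn -sumrMnr.
apply: eq_bigr => j nj.
rewrite (eq_bigr (fun _ => f i (x i))); last first.
  by move=> z _; rewrite /prodlab /upd !ffunE dfwith_out // eq_sym.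
rewrite sumr_const; congr (_ *+ _).
by rewrite -(reg j (x j)) cardsE.
Qed.
End Helpers.

Theorem mainTheorem7 (k : nat) (V : 'I_k -> finType) (e : forall i, rel (V i))
    (A : 'I_k -> finZmodType) (r n : 'I_k -> nat) (I J L : {set 'I_k}) :
    (forall i, simple_graph (e i)) ->
    (forall i, regular (e i) (r i)) ->
    (forall i, #|V i| = n i) ->
    (forall i, 2 <= n i) ->
    (forall i, #|A i| = n i) ->
    [disjoint I & J] -> [disjoint I & L] -> [disjoint J & L] ->
    I :|: J :|: L = [set: 'I_k] ->
    (forall i, i \in I ->
       distance_magic (e i) (A i) /\ coprime ((\sum_(t < k) r t) - r i) (n i)) ->
    (forall j, j \in J ->
       distance_antimagic (e j) (A j) /\ zexp (A j) %| (\sum_(t < k) r t) - r j) ->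
    (forall l, l \in L ->
       (exists f : V l -> A l, balanced_labelling (e l) (r l) f) /\
       coprime (\sum_(t < k) r t) (n l)) ->
    distance_antimagic (cart_prod e) (dprodG A).
Proof.
move=> simp reg cardV n2 cardA dIJ dIL dJL cover HI HJ HL.
set R := \sum_(t < k) r t.
have rle i : r i <= R by rewrite /R (bigD1 i) //= leq_addr.
have Hf : forall i, exists fi : V i -> A i, bijective fi /\
    injective (fun a => (weight (e i) fi a + fi a *+ (R - r i))%R).
  move=> i; have : i \in I :|: J :|: L by rewrite cover inE.
  rewrite !inE => /orP[/orP[iI|iJ]|iL].
  - case: (HI i iI) => [[fi [bij magic]] cop]; exists fi; split=> // a b /=.
    rewrite (magic a b) => /addrI /mulrn_coprime_inj.
    rewrite cardA => /(_ cop); exact: bij_inj.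
  - case: (HJ i iJ) => [[fi [bij inj]] d]; exists fi; split=> // a b /=.
    by rewrite !mulrn_exp // !addr0; exact: inj.
  - case: (HL i iL) => [[fi [bij bal]] cop]; exists fi; split=> // a b /=.
    rewrite !bal -!mulrnDr subnKC // => /mulrn_coprime_inj.
    rewrite cardA => /(_ cop); exact: bij_inj.
have [fs fsP] : exists fs : forall i, V i -> A i, forall i, bijective (fs i) /\
    injective (fun a => (weight (e i) (fs i) a + fs i a *+ (R - r i))%R).
  exists (fun i => proj1_sig (constructive_indefinite_description _ (Hf i))).
  move=> i; exact: proj2_sig (constructive_indefinite_description _ (Hf i)).
have Hg i : exists g, cancel (fs i) g /\ cancel g (fs i).
  by case: (fsP i).1 => g c1 c2; exists g.
have [gs gsP] : exists gs : forall i, A i -> V i,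
    forall i, cancel (fs i) (gs i) /\ cancel (gs i) (fs i).
  exists (fun i => proj1_sig (constructive_indefinite_description _ (Hg i))).
  move=> i; exact: proj2_sig (constructive_indefinite_description _ (Hg i)).
exists (@prodlab k V A fs); split.
  exists (fun a : dprodG A => (finfun (fun i => gs i (a i)) : {dffun forall i, V i})).
    by move=> x; apply/ffunP => i; rewrite !ffunE (gsP i).1.
  by move=> a; apply/ffunP => i; rewrite !ffunE (gsP i).2.
move=> x y H; apply/ffunP => i; apply: (fsP i).2.
have := congr1 (fun a : dprodG A => a i) H.
by rewrite /= !(@weight_prod k V e A r (fun j => (simp j).2) reg fs).
Qed.
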